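(* Let $(S_n)_{n\ge0}=((S_n^{(1)},S_n^{(2)}))_{n\ge 0}$ be a random walk in $\mathbb Z^2$ with $S_0=(0,0)$ and i.i.d. increments $\mathcal X_k$ satisfying $$P(\mathcal X_k=(1,0))=\omega,\quad P(\mathcal X_k=(-1,0))=\varepsilon,\quad P(\mathcal X_k=(0,1))=\gamma,\quad P(\mathcal X_k=(0,-1))=\delta,$$ where $\omega,\varepsilon,\gamma,\delta\ge0$ and $\omega+\varepsilon+\gamma+\delta=1$. Then for every $n\ge1$, $x=0,1,\dots,n$ and $-n\le y\le n$, $$P\big(S_n^{(2)}=y\mid S_n^{(1)}=x\big)=P\big(S_n^{(2)}=y\mid S_n^{(1)}=-x\big).$$
   Context: Conditional probabilities are considered for conditioning events of positive probability. *)

(* Defs.v *)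
From HB Require Import structures.
From mathcomp Require Import all_boot all_order all_algebra.
From mathcomp Require Import reals.
Set Implicit Arguments. Unset Strict Implicit. Unset Printing Implicit Defensive.
Import Order.TTheory GRing.Theory Num.Theory.
Local Open Scope ring_scope.

Definition incr (i : 'I_4) : int * int :=
  match val i with
  | 0%N => (1, 0)
  | 1%N => (-1, 0)
  | 2%N => (0, 1)
  | _ => (0, -1)
  end.

Definition stepP {R : realType} (w e g d : R) (i : 'I_4) : R :=
  match val i with
  | 0%N => w
  | 1%N => e
  | 2%N => g
  | _ => d
  end.

(* A trajectory of length n: the sequence of the increments X_1..X_n. *)
Definition walk n := {ffun 'I_n -> 'I_4}.

Definition S1 n (s : walk n) : int := \sum_(k < n) (incr (s k)).1.
Definition S2 n (s : walk n) : int := \sum_(k < n) (incr (s k)).2.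

(* Law of (X_1,...,X_n) for i.i.d. increments: product measure. *)
Definition prob {R : realType} (w e g d : R) {n} (A : pred (walk n)) : R :=
  \sum_(s : walk n | A s) \prod_(k < n) stepP w e g d (s k).

Definition cprob {R : realType} (w e g d : R) {n} (B A : pred (walk n)) : R :=
  prob w e g d (predI B A) / prob w e g d A.

(* Main.v *)
Require Import Defs.
From mathcomp Require Import all_boot all_order all_algebra.
From mathcomp Require Import reals.
From mathcomp Require Import ring.
Import Order.TTheory GRing.Theory Num.Theory.
Local Open Scope ring_scope.
Set Implicit Arguments. Unset Strict Implicit.

Definition sw (i : 'I_4) : 'I_4 :=
  if val i == 0%N then @Ordinal 4 1 isT
  else if val i == 1%N then @Ordinal 4 0 isT else i.

Lemma swK : involutive sw.
Proof. by case=> [[|[|[|[|?]]]] Hi] //; apply/val_inj. Qed.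

Definition swapw n (s : walk n) : walk n := [ffun k => sw (s k)].

Lemma swapwK n : involutive (@swapw n).
Proof. by move=> s; apply/ffunP=> k; rewrite !ffunE swK. Qed.

Lemma incr_sw1 i : (incr (sw i)).1 = - (incr i).1.
Proof. by case: i => [[|[|[|[|?]]]] Hi]. Qed.
Lemma incr_sw2 i : (incr (sw i)).2 = (incr i).2.
Proof. by case: i => [[|[|[|[|?]]]] Hi]. Qed.

Lemma S1_sw n (s : walk n) : S1 (swapw s) = - S1 s.
Proof.
rewrite /S1 -sumrN; apply: eq_bigr => k _; by rewrite ffunE incr_sw1.
Qed.
Lemma S2_sw n (s : walk n) : S2 (swapw s) = S2 s.
Proof. rewrite /S2; apply: eq_bigr => k _; by rewrite ffunE incr_sw2. Qed.

Section Key.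
Variables (R : realType) (w e g d : R).
Hypotheses (w0 : w != 0) (e0 : e != 0).

Let r := w / e.
Lemma r0 : r != 0. Proof. by rewrite /r mulf_neq0 ?invr_eq0. Qed.
Lemma r_unit : r \is a GRing.unit. Proof. by rewrite unitfE r0. Qed.

Lemma weight_sw i : stepP w e g d i = stepP w e g d (sw i) * r ^ (incr i).1.
Proof.
case: i => [[|[|[|[|?]]]] Hi] /=; rewrite /stepP /= /r.
- rewrite expr1z; by field; rewrite ?w0 ?e0 ?andbT.
- rewrite exprN1; by field; rewrite ?w0 ?e0 ?andbT.
- by rewrite expr0z mulr1.
- by rewrite expr0z mulr1.
- by rewrite expr0z mulr1.
Qed.

Lemma key n (B : pred (walk n)) (z : int) :
  (forall s, B (swapw s) = B s) ->
  \sum_(s : walk n | B s && (S1 s == z)) \prod_(k < n) stepP w e g d (s k)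
  = r ^ z * \sum_(s : walk n | B s && (S1 s == - z)) \prod_(k < n) stepP w e g d (s k).
Proof.
move=> HB.
rewrite mulr_sumr.
have -> : \sum_(s : walk n | B s && (S1 s == z)) \prod_(k < n) stepP w e g d (s k)
  = \sum_(s : walk n | B s && (S1 s == z)) (r ^ z * \prod_(k < n) stepP w e g d (swapw s k)).
  apply: eq_bigr => s /andP[_ /eqP <-].
  rewrite /S1 (big_morph (fun z : int => r ^ z) (exprzDr r_unit) (expr0z r)).
  rewrite -big_split /=; apply: eq_bigr => k _.
  by rewrite ffunE mulrC -weight_sw.
rewrite (reindex_inj (can_inj (@swapwK n))) /=.
apply: eq_big => [s|s _]; last by rewrite swapwK.
by rewrite HB S1_sw -{1}(opprK z) eqr_opp.
Qed.

End Key.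

Lemma prob_e0 (R : realType) (w e g d : R) n (z : int) :
  e = 0 -> z < 0 -> prob w e g d (fun s : walk n => S1 s == z) = 0.
Proof.
move=> -> hz; rewrite /prob; apply: big1 => s /eqP Hs.
case: (pickP (fun k => val (s k) == 1%N)) => [k Hk|H].
  rewrite (bigD1 k) //= /stepP (eqP Hk) /=; by rewrite mul0r.
have : 0 <= S1 s.
  rewrite /S1; apply: sumr_ge0 => k _; move: (H k).
  by case: (s k) => [[|[|[|[|?]]]] Hi].
by rewrite Hs leNgt hz.
Qed.

Lemma prob_w0 (R : realType) (w e g d : R) n (z : int) :
  w = 0 -> 0 < z -> prob w e g d (fun s : walk n => S1 s == z) = 0.
Proof.
move=> -> hz; rewrite /prob; apply: big1 => s /eqP Hs.
case: (pickP (fun k => val (s k) == 0%N)) => [k Hk|H].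
  rewrite (bigD1 k) //= /stepP (eqP Hk) /=; by rewrite mul0r.
have : S1 s <= 0.
  rewrite /S1; apply: sumr_le0 => k _; move: (H k).
  by case: (s k) => [[|[|[|[|?]]]] Hi].
by rewrite Hs leNgt hz.
Qed.

Theorem theorem1 (R : realType) (w e g d : R)
  (hw : 0 <= w) (he : 0 <= e) (hg : 0 <= g) (hd : 0 <= d)
  (hsum : w + e + g + d = 1)
  (n x : nat) (y : int)
  (hn : (1 <= n)%N) (hx : (x <= n)%N)
  (hy1 : - (n%:Z) <= y) (hy2 : y <= n%:Z)
  (hpos1 : 0 < prob w e g d (fun s : walk n => S1 s == x%:Z))
  (hpos2 : 0 < prob w e g d (fun s : walk n => S1 s == - (x%:Z))) :
  cprob w e g d (fun s : walk n => S2 s == y) (fun s : walk n => S1 s == x%:Z)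
  = cprob w e g d (fun s : walk n => S2 s == y) (fun s : walk n => S1 s == - (x%:Z)).
Proof.
case: x hx hpos1 hpos2 => [|x] hx hpos1 hpos2; first by rewrite oppr0.
have e0 : e != 0.
  apply/eqP => E; move: hpos2; rewrite (prob_e0 _ _ _ _ E) ?ltxx //.
have w0 : w != 0.
  apply/eqP => E; move: hpos1; rewrite (prob_w0 _ _ _ _ E) ?ltxx //.
have HA : forall z : int, prob w e g d (fun s : walk n => S1 s == z)
   = (w / e) ^ z * prob w e g d (fun s : walk n => S1 s == - z).
  move=> z; rewrite /prob.
  have E := @key R w e g d w0 e0 n predT z (fun _ => erefl).
  by move: E => /=.
have HB := @key R w e g d w0 e0 n (fun s => S2 s == y) x.+1%:Z.
rewrite /cprob HA /prob /= HB; last by move=> s; rewrite S2_sw.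
move: hpos2; rewrite /prob => hpos2.
rewrite -mulf_div divff ?mul1r //.
by rewrite expfz_neq0 // mulf_neq0 ?invr_eq0.
Qed.
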